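(* For every instance of MCND that has a feasible solution and every partial aggregation $\mathcal{B}$ (see context), the optimal values of the LP relaxations of the PA, PAi and PAe formulations built on $\mathcal{B}$ are each lower bounds on the optimal value of MCND.
   Context: An instance of MCND consists of a directed graph $G=(\mathcal{N},\mathcal{A})$, a finite set $\mathcal{K}$ of commodities, each $k\in\mathcal{K}$ having an origin $o^k\in\mathcal{N}$, a destination $s^k\in\mathcal{N}$ and a demand $d^k\ge 0$, and for each arc $(i,j)\in\mathcal{A}$ a capacity $u_{ij}$, a per-unit flow cost $c_{ij}$ and a fixed cost $f_{ij}$, all nonnegative. Let $o_i^k=1$ if $i=o^k$ and $0$ otherwise, $s_i^k=1$ if $i=s^k$ and $0$ otherwise, $\mathcal{N}_i^+=\{j:(i,j)\in\mathcal{A}\}$, $\mathcal{N}_i^-=\{j:(j,i)\in\mathcal{A}\}$. MCND: minimize $\sum_{k}\sum_{(i,j)}c_{ij}x_{ij}^k+\sum_{(i,j)}f_{ij}y_{ij}$ over $x_{ij}^k\ge0$, $y_{ij}\in\{0,1\}$, subject to $\sum_{j\in\mathcal{N}_i^+}x_{ij}^k-\sum_{j\in\mathcal{N}_i^-}x_{ji}^k=(o_i^k-s_i^k)d^k$ for all $k,i$; $\sum_k x_{ij}^k\le u_{ij}y_{ij}$ for all $(i,j)$; $x_{ij}^k\le d^k y_{ij}$ for all $k,(i,j)$. Dispersion: a nonempty set $\mathcal{K}_b\subseteq\mathcal{K}$ of commodities sharing a common origin, together with, for every arc $(i,j)\in\mathcal{A}$, a partition of $\mathcal{K}_b$ into $\mathcal{K}_b^{ij}$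 (aggregated on $(i,j)$) and $\mathcal{D}_b^{ij}$ (disaggregated on $(i,j)$); either part may be empty. Let $\mathcal{G}_b^{ij}$ be the family consisting of the set $\mathcal{K}_b^{ij}$ (if nonempty) together with the singletons $\{k\}$, $k\in\mathcal{D}_b^{ij}$. A partial aggregation is a set $\mathcal{B}$ of dispersions such that every $k\in\mathcal{K}$ lies in $\mathcal{K}_b$ for exactly one $b\in\mathcal{B}$. LP relaxation of PA (for $\mathcal{B}$): variables $x_{ij}^D\ge0$ for $(i,j)\in\mathcal{A}$, $b\in\mathcal{B}$, $D\in\mathcal{G}_b^{ij}$ (since the $\mathcal{K}_b$ are disjoint, $D$ determines $b$), and $0\le y_{ij}\le1$; minimize $\sum_{(i,j)}c_{ij}\sum_{b}\sum_{D\in\mathcal{G}_b^{ij}}x_{ij}^D+\sum_{(i,j)}f_{ij}y_{ij}$ subject to: for all $b\in\mathcal{B}$, $i\in\mathcal{N}$: $\sum_{j\in\mathcal{N}_i^+}\sum_{D\in\mathcal{G}_b^{ij}}x_{ij}^D-\sum_{j\in\mathcal{N}_i^-}\sum_{D\in\mathcal{G}_b^{ji}}x_{ji}^D=\sum_{k\in\mathcal{K}_b}(o_i^k-s_i^k)d^k$; for all $(i,j)$: $\sum_b\sum_{D\in\mathcal{G}_b^{ij}}x_{ij}^D\le u_{ij}y_{ij}$; for all $(i,j),b,D\in\mathcal{G}_b^{ij}$: $x_{ij}^D\le(\sum_{k\in D}d^k)y_{ij}$. LP relaxation of PAi: the PA LP plus, for all $b\in\mathcal{B}$, $k\in\mathcal{K}_b$,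 $i\in\mathcal{N}$: $\sum_{j\in\mathcal{N}_i^+}\sum_{D\in\mathcal{G}_b^{ij}:k\in D}x_{ij}^D-\sum_{j\in\mathcal{N}_i^-}\sum_{D\in\mathcal{G}_b^{ji}:D=\{k\}}x_{ji}^D\ge(o_i^k-s_i^k)d^k$ and $\sum_{j\in\mathcal{N}_i^+}\sum_{D\in\mathcal{G}_b^{ij}:D=\{k\}}x_{ij}^D-\sum_{j\in\mathcal{N}_i^-}\sum_{D\in\mathcal{G}_b^{ji}:k\in D}x_{ji}^D\le(o_i^k-s_i^k)d^k$. LP relaxation of PAe: the PA LP plus the following. For $b\in\mathcal{B}$, $i\in\mathcal{N}$ let $\mathcal{L}_b^i=\{k\in\mathcal{K}_b:k\in\mathcal{D}_b^{ji}\text{ for some }j\in\mathcal{N}_i^-\text{ or }k\in\mathcal{D}_b^{ij}\text{ for some }j\in\mathcal{N}_i^+\}$; $\mathcal{M}_b^i=\{\{k\}:k\in\mathcal{L}_b^i\}\cup\{\mathcal{K}_b\setminus\mathcal{L}_b^i\}$ (the last set only if nonempty); $\check{\mathcal{T}}_b^i$ = the set of distinct nonempty sets among $\{\mathcal{K}_b^{ji}:j\in\mathcal{N}_i^-\}$; $\hat{\mathcal{T}}_b^i$ = the set of distinct nonempty sets among $\{\mathcal{K}_b^{ij}:j\in\mathcal{N}_i^+\}$. For every $(b,i)$ with $\mathcal{L}_b^i\neq\emptyset$ add variables $z_{CD}^{ib}\ge0$ for $C\in\check{\mathcal{T}}_b^i$, $D\in\mathcal{M}_b^i$ with $C\cap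 D\ne\emptyset$, and $z_{DC}^{ib}\ge0$ for $D\in\mathcal{M}_b^i$, $C\in\hat{\mathcal{T}}_b^i$ with $C\cap D\neq\emptyset$ (zero cost), and constraints: for each $D\in\mathcal{M}_b^i$: $\sum_{j\in\mathcal{N}_i^+:\,D=\{k\},k\in\mathcal{D}_b^{ij}}x_{ij}^{D}-\sum_{j\in\mathcal{N}_i^-:\,D=\{k\},k\in\mathcal{D}_b^{ji}}x_{ji}^{D}+\sum_{C\in\hat{\mathcal{T}}_b^i:C\cap D\neq\emptyset}z_{DC}^{ib}-\sum_{C\in\check{\mathcal{T}}_b^i:C\cap D\ne\emptyset}z_{CD}^{ib}=\sum_{k\in D}(o_i^k-s_i^k)d^k$; for each $C\in\check{\mathcal{T}}_b^i$: $\sum_{D\in\mathcal{M}_b^i:C\cap D\ne\emptyset}z_{CD}^{ib}-\sum_{j\in\mathcal{N}_i^-:\mathcal{K}_b^{ji}=C}x_{ji}^C=0$; for each $C\in\hat{\mathcal{T}}_b^i$: $\sum_{j\in\mathcal{N}_i^+:\mathcal{K}_b^{ij}=C}x_{ij}^C-\sum_{D\in\mathcal{M}_b^i:C\cap D\neq\emptyset}z_{DC}^{ib}=0$. The objective is that of PA. *)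

(* Defs.v *)
From HB Require Import structures.
From mathcomp Require Import reals.
From mathcomp Require Import all_boot all_order all_algebra.
Set Implicit Arguments. Unset Strict Implicit. Unset Printing Implicit Defensive.
Import Order.TTheory GRing.Theory Num.Theory.
Local Open Scope ring_scope.

(* An MCND instance: nodes N, arcs A (arc a goes from src a to dst a),
   commodities K (origin orig k, destination dest k, demand d k),
   capacity u, unit cost c, fixed cost f on arcs.
   A partial aggregation: dispersions indexed by the finite type B,
   KB b = K_b, agg b a = K_b^{a} (aggregated part on arc a),
   dis b a = D_b^{a} = K_b \ K_b^{a}. *)

Section MCND.
Variables (R : realType) (N A K : finType).
Variables (src dst : A -> N) (orig dest : K -> N) (d : K -> R) (u c f : A -> R).

Definition rhs (k : K) (i : N) : R := ((orig k == i)%:R - (dest k == i)%:R) * d k.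

Definition mcnd_feasible (x : K -> A -> R) (y : A -> bool) : Prop :=
  (forall k a, 0 <= x k a) /\
  (forall k i, \sum_(a | src a == i) x k a - \sum_(a | dst a == i) x k a = rhs k i) /\
  (forall a, \sum_k x k a <= u a * (y a)%:R) /\
  (forall k a, x k a <= d k * (y a)%:R).

Definition mcnd_obj (x : K -> A -> R) (y : A -> bool) : R :=
  \sum_k \sum_a c a * x k a + \sum_a f a * (y a)%:R.

Definition mcnd_value : R :=
  inf (fun v : R => exists x y, mcnd_feasible x y /\ v = mcnd_obj x y).

Variables (B : finType) (KB : B -> {set K}) (agg : B -> A -> {set K}).

Definition dis (b : B) (a : A) : {set K} := KB b :\: agg b a.

Definition is_partial_aggregation : Prop :=
  (forall b, KB b != set0) /\
  (forall b k k', k \in KB b -> k' \in KB b -> orig k = orig k') /\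
  (forall b a, agg b a \subset KB b) /\
  (forall k, exists! b, k \in KB b).

Definition Gb (b : B) (a : A) : {set {set K}} :=
  [set D | (D == agg b a) && (D != set0)] :|: [set [set k] | k in dis b a].

(* variables: x a D (= x_{ij}^D for a = (i,j), D in G_b^{ij}), y a in [0,1] *)
Definition pa_feasible (x : A -> {set K} -> R) (y : A -> R) : Prop :=
  (forall b a D, D \in Gb b a -> 0 <= x a D) /\
  (forall a, 0 <= y a <= 1) /\
  (forall b i, \sum_(a | src a == i) \sum_(D in Gb b a) x a D
             - \sum_(a | dst a == i) \sum_(D in Gb b a) x a D
             = \sum_(k in KB b) rhs k i) /\
  (forall a, \sum_b \sum_(D in Gb b a) x a D <= u a * y a) /\
  (forall b a D, D \in Gb b a -> x a D <= (\sum_(k in D) d k) * y a).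

Definition pa_obj (x : A -> {set K} -> R) (y : A -> R) : R :=
  \sum_a c a * (\sum_b \sum_(D in Gb b a) x a D) + \sum_a f a * y a.

Definition pa_value : R :=
  inf (fun v : R => exists x y, pa_feasible x y /\ v = pa_obj x y).

Definition pai_extra (x : A -> {set K} -> R) : Prop :=
  forall b k i, k \in KB b ->
    rhs k i <= \sum_(a | src a == i) \sum_(D in Gb b a | k \in D) x a D
               - \sum_(a | dst a == i) \sum_(D in Gb b a | D == [set k]) x a D /\
    \sum_(a | src a == i) \sum_(D in Gb b a | D == [set k]) x a D
      - \sum_(a | dst a == i) \sum_(D in Gb b a | k \in D) x a D <= rhs k i.

Definition pai_value : R :=
  inf (fun v : R => exists x y, pa_feasible x y /\ pai_extra x /\ v = pa_obj x y).

Definition Lset (b : B) (i : N) : {set K} :=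
  [set k in KB b | [exists a, ((dst a == i) || (src a == i)) && (k \in dis b a)]].

Definition Mset (b : B) (i : N) : {set {set K}} :=
  [set [set k] | k in Lset b i]
  :|: [set D | (D == KB b :\: Lset b i) && (D != set0)].

Definition Tin (b : B) (i : N) : {set {set K}} :=
  [set C | [exists a, (dst a == i) && (C == agg b a)] && (C != set0)].
Definition Tout (b : B) (i : N) : {set {set K}} :=
  [set C | [exists a, (src a == i) && (C == agg b a)] && (C != set0)].

Definition single_dis (b : B) (a : A) (D : {set K}) : bool :=
  [exists k, (D == [set k]) && (k \in dis b a)].

(* zin b i C D = z_{CD}^{ib} (C in \check T, D in M);
   zout b i D C = z_{DC}^{ib} (D in M, C in \hat T). *)
Definition pae_extra (x : A -> {set K} -> R)
    (zin zout : B -> N -> {set K} -> {set K} -> R) : Prop :=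
  forall b i, Lset b i != set0 ->
  (forall C D, C \in Tin b i -> D \in Mset b i -> C :&: D != set0 ->
       0 <= zin b i C D) /\
  (forall D C, D \in Mset b i -> C \in Tout b i -> C :&: D != set0 ->
       0 <= zout b i D C) /\
  (forall D, D \in Mset b i ->
       \sum_(a | (src a == i) && single_dis b a D) x a D
     - \sum_(a | (dst a == i) && single_dis b a D) x a D
     + \sum_(C in Tout b i | C :&: D != set0) zout b i D C
     - \sum_(C in Tin b i | C :&: D != set0) zin b i C D
     = \sum_(k in D) rhs k i) /\
  (forall C, C \in Tin b i ->
       \sum_(D in Mset b i | C :&: D != set0) zin b i C D
     - \sum_(a | (dst a == i) && (agg b a == C)) x a C = 0) /\
  (forall C, C \in Tout b i ->
       \sum_(a | (src a == i) && (agg b a == C)) x a C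
     - \sum_(D in Mset b i | C :&: D != set0) zout b i D C = 0).

Definition pae_value : R :=
  inf (fun v : R => exists x y zin zout,
         pa_feasible x y /\ pae_extra x zin zout /\ v = pa_obj x y).

End MCND.

(* Main.v *)
Require Import Defs.
From HB Require Import structures.
From mathcomp Require Import reals.
From mathcomp Require Import all_boot all_order all_algebra.
Set Implicit Arguments. Unset Strict Implicit. Unset Printing Implicit Defensive.
Import Order.TTheory GRing.Theory Num.Theory.
Local Open Scope ring_scope.

Lemma inf_le_gen (R : realType) (E M : classical_sets.set R) :
  (exists v, M v) -> (forall v, M v -> E v) -> (forall v, E v -> 0 <= v) ->
  inf E <= inf M.
Proof.
move=> [v Mv] ME E0.
apply: lb_le_inf; first by exists v.
move=> w Mw.
have hl : classical_sets.has_lbound E by exists 0 => z Ez; exact: E0.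
exact: (ge_inf hl (ME _ Mw)).
Qed.

Lemma sum_part (R : realType) (K I : finType) (P : pred I) (F : I -> {set K})
    (S : {set K}) (g : K -> R) :
  (forall i, P i -> F i \subset S) ->
  (forall k, k \in S -> exists i0, [/\ P i0, k \in F i0 &
        forall i, P i -> k \in F i -> i = i0]) ->
  \sum_(i | P i) \sum_(k in F i) g k = \sum_(k in S) g k.
Proof.
move=> H1 H2.
under eq_bigr do rewrite big_mkcond.
rewrite exchange_big [RHS]big_mkcond /=; apply: eq_bigr => k _.
case: ifP => kS.
- have [i0 [Pi0 ki0 un]] := H2 k kS.
  rewrite (bigD1 i0) //= ki0 big1 ?addr0 // => i /andP[Pi ne].
  case: ifP => // kFi. by rewrite (un i Pi kFi) eqxx in ne.
- rewrite big1 // => i Pi. case: ifP => // kFi.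
  by have := subsetP (H1 i Pi) k kFi; rewrite kS.
Qed.

Lemma sum_part_restr (R : realType) (K I : finType) (P : pred I) (F : I -> {set K})
    (S C : {set K}) (g : K -> R) :
  (forall i, P i -> F i \subset S) ->
  (forall k, k \in S -> exists i0, [/\ P i0, k \in F i0 &
        forall i, P i -> k \in F i -> i = i0]) ->
  \sum_(i | P i) \sum_(k in C :&: F i) g k = \sum_(k in C :&: S) g k.
Proof.
move=> H1 H2; apply: (sum_part (F := fun i => C :&: F i)).
- by move=> i Pi; apply: setIS; exact: H1.
- move=> k; rewrite inE => /andP[kC kS].
  have [i0 [Pi0 ki0 un]] := H2 k kS.
  exists i0; split => //; first by rewrite inE kC.
  by move=> i Pi; rewrite inE => /andP[_ kFi]; exact: un.
Qed.
Section Main.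
Variables (R : realType) (N A K B : finType).
Variables (src dst : A -> N) (orig dest : K -> N) (d : K -> R) (u c f : A -> R).
Variables (KB : B -> {set K}) (agg : B -> A -> {set K}).
Hypothesis Hagg : forall b a, agg b a \subset KB b.
Hypothesis HKB : forall k, exists! b, k \in KB b.
Variables (x : K -> A -> R) (y : A -> bool).
Hypothesis Hfeas : mcnd_feasible src dst orig dest d u x y.

Definition xP (a : A) (D : {set K}) : R := \sum_(k in D) x k a.
Definition yP (a : A) : R := (y a)%:R.

Lemma x_ge0 k a : 0 <= x k a.
Proof. by case: Hfeas. Qed.

Lemma xP_ge0 a D : 0 <= xP a D.
Proof. by apply: sumr_ge0 => k _; exact: x_ge0. Qed.

Lemma cons_k k i : \sum_(a | src a == i) x k a - \sum_(a | dst a == i) x k a = rhs orig dest d k i.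
Proof. by case: Hfeas => _ [H _]; exact: H. Qed.

Lemma Gb_part b a : 
  [/\ forall D, D \in Gb KB agg b a -> D \subset KB b &
   forall k, k \in KB b -> exists D0, [/\ D0 \in Gb KB agg b a, k \in D0 &
        forall D, D \in Gb KB agg b a -> k \in D -> D = D0]].
Proof.
split.
- move=> D; rewrite inE => /orP[]; first by rewrite inE => /andP[/eqP -> _].
  move=> /imsetP[k kd ->]; rewrite sub1set; move: kd; rewrite inE => /andP[].
  by [].
- move=> k kKB.
  case: (boolP (k \in agg b a)) => ka.
  + exists (agg b a); split => //.
    * rewrite inE; apply/orP; left; rewrite inE eqxx /=.
      by apply/set0Pn; exists k.
    * move=> D; rewrite inE => /orP[]; first by rewrite inE => /andP[/eqP -> _].
      move=> /imsetP[k' kd ->]; rewrite inE => /eqP ek; subst k'.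
      by move: kd; rewrite inE ka.
  + exists [set k]; split.
    * rewrite inE; apply/orP; right; apply/imsetP; exists k => //.
      by rewrite inE ka.
    * by rewrite inE.
    * move=> D; rewrite inE => /orP[]; first by rewrite inE => /andP[/eqP -> _] kD; rewrite kD in ka.
      by move=> /imsetP[k' kd ->]; rewrite inE => /eqP ->.
Qed.

Lemma sum_Gb b a (g : K -> R) : \sum_(D in Gb KB agg b a) \sum_(k in D) g k = \sum_(k in KB b) g k.
Proof. by have [H1 H2] := Gb_part b a; exact: (sum_part (F := id)). Qed.

Lemma sum_KB (g : K -> R) : \sum_b \sum_(k in KB b) g k = \sum_k g k.
Proof.
rewrite (sum_part (S := [set: K])).
- by apply: eq_bigl => k; rewrite inE.
- by move=> b _; apply: subsetT.
- move=> k _; have [b [kb un]] := HKB k.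
  by exists b; split => // b' _ kb'; rewrite (un b' kb').
Qed.

Lemma pa_feas : pa_feasible src dst orig dest d u KB agg xP yP.
Proof.
case: Hfeas => [H0 [Hc [Hu Hd]]].
split; [|split; [|split; [|split]]].
- by move=> *; exact: xP_ge0.
- by move=> a; rewrite /yP; case: (y a); rewrite /= ?lexx ?ler01.
- move=> b i; rewrite /xP.
  under eq_bigr do rewrite sum_Gb.
  under [X in _ - X = _]eq_bigr do rewrite sum_Gb.
  rewrite exchange_big [X in _ - X]exchange_big -sumrB.
  by apply: eq_bigr => k _; exact: Hc.
- move=> a; rewrite /xP.
  under eq_bigr do rewrite sum_Gb.
  by rewrite sum_KB; exact: Hu.
- move=> b a D _; rewrite /xP /yP mulr_suml.
  by apply: ler_sum => k _; exact: Hd.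
Qed.

Lemma pa_obj_eq : pa_obj c f KB agg xP yP = mcnd_obj c f x y.
Proof.
rewrite /pa_obj /mcnd_obj /xP /yP; congr (_ + _).
under eq_bigr do rewrite (eq_bigr _ (fun b _ => sum_Gb b _ _)) sum_KB mulr_sumr.
by rewrite exchange_big.
Qed.


Lemma pai_lb b k a : k \in KB b ->
  x k a <= \sum_(D in Gb KB agg b a | k \in D) xP a D.
Proof.
move=> kb; have [_ H2] := Gb_part b a; have [D0 [D0G kD0 _]] := H2 k kb.
rewrite (bigD1 D0) ?D0G ?kD0 //= -[X in X <= _]addr0.
apply: lerD; last by apply: sumr_ge0 => *; exact: xP_ge0.
rewrite /xP (bigD1 k) //= -[X in X <= _]addr0; apply: lerD => //.
by apply: sumr_ge0 => *; exact: x_ge0.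
Qed.

Lemma pai_ub b k a :
  \sum_(D in Gb KB agg b a | D == [set k]) xP a D <= x k a.
Proof.
case: (boolP ([set k] \in Gb KB agg b a)) => h.
- rewrite (bigD1 [set k]) ?h ?eqxx //= big1 ?addr0.
  + by rewrite /xP big_set1.
  + by move=> D /andP[/andP[_ e] ne]; rewrite e in ne.
- rewrite big1 ?x_ge0 // => D /andP[hD /eqP e]; subst D.
  by rewrite hD in h.
Qed.

Lemma pai_ex : pai_extra src dst orig dest d KB agg xP.
Proof.
move=> b k i kb; rewrite -cons_k; split.
- apply: lerB; apply: ler_sum => a _; [exact: pai_lb | exact: pai_ub].
- apply: lerB; apply: ler_sum => a _; [exact: pai_ub | exact: pai_lb].
Qed.


Definition zgen (p : pred A) (b : B) (C D : {set K}) : R :=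
  \sum_(a | p a && (agg b a == C)) \sum_(k in C :&: D) x k a.
Definition zin (b : B) (i : N) (C D : {set K}) : R := zgen (fun a => dst a == i) b C D.
Definition zout (b : B) (i : N) (D C : {set K}) : R := zgen (fun a => src a == i) b C D.

Lemma zgen_ge0 p b C D : 0 <= zgen p b C D.
Proof. by apply: sumr_ge0 => a _; apply: sumr_ge0 => k _; exact: x_ge0. Qed.

Lemma M_part b i :
  [/\ forall D, D \in Mset src dst KB agg b i -> D \subset KB b &
   forall k, k \in KB b -> exists D0, [/\ D0 \in Mset src dst KB agg b i, k \in D0 &
        forall D, D \in Mset src dst KB agg b i -> k \in D -> D = D0]].
Proof.
split.
- move=> D; rewrite inE => /orP[].
  + move=> /imsetP[k kL ->]; rewrite sub1set; move: kL; rewrite inE => /andP[].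
    by [].
  + rewrite inE => /andP[/eqP -> _]; exact: subsetDl.
- move=> k kKB.
  case: (boolP (k \in Lset src dst KB agg b i)) => kL.
  + exists [set k]; split.
    * by rewrite inE; apply/orP; left; apply/imsetP; exists k.
    * by rewrite inE.
    * move=> D; rewrite inE => /orP[].
      - by move=> /imsetP[k' _ ->]; rewrite inE => /eqP ->.
      - by rewrite inE => /andP[/eqP -> _]; rewrite inE kL.
  + exists (KB b :\: Lset src dst KB agg b i); split.
    * rewrite inE; apply/orP; right; rewrite inE eqxx /=.
      by apply/set0Pn; exists k; rewrite inE kL.
    * by rewrite inE kL.
    * move=> D; rewrite inE => /orP[].
      - move=> /imsetP[k' k'L ->]; rewrite inE => /eqP ek; subst k'.
        by rewrite k'L in kL.
      - by rewrite inE => /andP[/eqP -> _].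
Qed.

Lemma dropfilter p b (T : {set {set K}}) D :
  \sum_(C in T | C :&: D != set0) zgen p b C D = \sum_(C in T) zgen p b C D.
Proof.
rewrite [RHS](bigID (fun C => C :&: D != set0)) /= [X in _ = _ + X]big1 ?addr0 //.
move=> C /andP[_ /negbNE /eqP e]; rewrite /zgen big1 // => a _.
by rewrite e big_set0.
Qed.

Lemma sumM_zgen p b i (C : {set K}) : C \subset KB b ->
  \sum_(D in Mset src dst KB agg b i) zgen p b C D
  = \sum_(a | p a && (agg b a == C)) xP a C.
Proof.
move=> sC; rewrite /zgen exchange_big; apply: eq_bigr => a _.
have [H1 H2] := M_part b i.
rewrite (@sum_part_restr R K _ (fun D => D \in Mset src dst KB agg b i) id (KB b) C (fun k => x k a) H1 H2).
by rewrite /xP (setIidPl sC).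
Qed.

Lemma D_ident (p : pred A) b i D :
  (forall a k, p a -> k \in dis KB agg b a -> k \in Lset src dst KB agg b i) ->
  D \in Mset src dst KB agg b i ->
  \sum_(a | p a && single_dis KB agg b a D) xP a D
  + \sum_(C in [set C : {set K} | [exists a, p a && (C == agg b a)] && (C != set0)]
            | C :&: D != set0) zgen p b C D
  = \sum_(k in D) \sum_(a | p a) x k a.
Proof.
move=> hp DM.
have hA : \sum_(a | p a && single_dis KB agg b a D) xP a D =
          \sum_(a | p a) \sum_(k in D | k \in dis KB agg b a) x k a.
  rewrite [RHS](bigID (fun a => single_dis KB agg b a D)) /= [X in _ = _ + X]big1 ?addr0.
  - apply: eq_bigr => a /andP[_ /existsP[k0 /andP[/eqP e kd]]].
    rewrite /xP e; apply: eq_bigl => k; rewrite in_set1.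
    by case: eqP => [->|] //=; rewrite kd.
  - move=> a /andP[pa nsd]; apply: big1 => k /andP[kD kd]; exfalso.
    have kL := hp a k pa kd.
    move: DM; rewrite inE => /orP[/imsetP[k' k'L eD] | ].
    + subst D; move: kD; rewrite inE => /eqP ek; subst k'.
      move/negP: nsd; apply; apply/existsP; exists k; by rewrite eqxx kd.
    + rewrite inE => /andP[/eqP eD _]; subst D; move: kD; by rewrite inE kL.
have hB : \sum_(C in [set C : {set K} | [exists a, p a && (C == agg b a)] && (C != set0)]
            | C :&: D != set0) zgen p b C D =
          \sum_(a | p a) \sum_(k in D | k \in agg b a) x k a.
  rewrite dropfilter.
  rewrite [RHS](bigID (fun a => agg b a != set0)) /= [X in _ = _ + X]big1 ?addr0; last first.
    move=> a /andP[_ /negbNE /eqP e]; rewrite e big1 // => k /andP[_].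
    by rewrite in_set0.
  rewrite (partition_big (agg b) (fun C => C \in [set C : {set K} | [exists a, p a && (C == agg b a)] && (C != set0)])); last first.
    move=> a /andP[pa ne]; rewrite inE ne andbT; apply/existsP; exists a.
    by rewrite pa eqxx.
  apply: eq_bigr => C; rewrite inE => /andP[_ Cne].
  rewrite /zgen; apply: eq_big => a.
  - case e: (agg b a == C); rewrite ?andbF ?andbT //.
    by rewrite (eqP e) Cne andbT.
  - move=> /andP[_ /eqP e]; rewrite -e; apply: eq_bigl => k.
    by rewrite inE andbC.
rewrite hA hB -big_split [RHS]exchange_big /=; apply: eq_bigr => a _.
rewrite [RHS](bigID (fun k => k \in agg b a)) addrC /=; congr (_ + _).
apply: eq_bigl => k; rewrite /dis !inE.
case kD: (k \in D) => //=.
have [H1 _] := M_part b i.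
by rewrite (subsetP (H1 D DM) k kD) andbT.
Qed.


Lemma dropfilter2 p b (T : {set {set K}}) C :
  \sum_(D in T | C :&: D != set0) zgen p b C D = \sum_(D in T) zgen p b C D.
Proof.
rewrite [RHS](bigID (fun D => C :&: D != set0)) /= [X in _ = _ + X]big1 ?addr0 //.
move=> D /andP[_ /negbNE /eqP e]; rewrite /zgen big1 // => a _.
by rewrite e big_set0.
Qed.

Lemma arith4 (a1 b1 c1 d1 : R) : a1 - b1 + c1 - d1 = (a1 + c1) - (b1 + d1).
Proof. by rewrite opprD !addrA (addrAC a1). Qed.

Lemma Tsub b (p : pred A) C : C \in [set C : {set K} | [exists a, p a && (C == agg b a)] && (C != set0)] ->
  C \subset KB b.
Proof. by rewrite inE => /andP[/existsP[a /andP[_ /eqP ->]] _]; exact: Hagg. Qed.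

Lemma pae_ex : pae_extra src dst orig dest d KB agg xP zin zout.
Proof.
move=> b i _; split; [|split; [|split; [|split]]].
- by move=> *; exact: zgen_ge0.
- by move=> *; exact: zgen_ge0.
- move=> D DM.
  have Ho := @D_ident (fun a => src a == i) b i D.
  have Hi := @D_ident (fun a => dst a == i) b i D.
  rewrite /= in Ho Hi.
  rewrite -(eq_bigr _ (fun k _ => cons_k k i)) sumrB -Ho -?Hi //.
  + exact: arith4.
  + move=> a k pa kd; rewrite inE; apply/andP; split.
      by move: kd; rewrite inE => /andP[].
    by apply/existsP; exists a; rewrite kd pa.
  + move=> a k pa kd; rewrite inE; apply/andP; split.
      by move: kd; rewrite inE => /andP[].
    by apply/existsP; exists a; rewrite kd pa orbT.
- move=> C CT; rewrite /zin dropfilter2 sumM_zgen ?subrr //.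
  exact: (Tsub CT).
- move=> C CT; rewrite /zout dropfilter2 sumM_zgen ?subrr //.
  exact: (Tsub CT).
Qed.

End Main.

Lemma pa_obj_ge0 (R : realType) (N A K B : finType)
    (src dst : A -> N) (orig dest : K -> N) (d : K -> R) (u c f : A -> R)
    (KB : B -> {set K}) (agg : B -> A -> {set K}) x y :
  (forall a, 0 <= c a) -> (forall a, 0 <= f a) ->
  pa_feasible src dst orig dest d u KB agg x y -> 0 <= pa_obj c f KB agg x y.
Proof.
move=> c0 f0 [H0 [Hy _]]; apply: addr_ge0; apply: sumr_ge0 => a _.
- apply: mulr_ge0 => //; apply: sumr_ge0 => b _; apply: sumr_ge0 => D DG.
  exact: H0 DG.
- by apply: mulr_ge0 => //; case/andP: (Hy a).
Qed.

Theorem corollary1 (R : realType) (N A K B : finType)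
    (src dst : A -> N) (orig dest : K -> N) (d : K -> R) (u c f : A -> R)
    (KB : B -> {set K}) (agg : B -> A -> {set K}) :
  injective (fun a => (src a, dst a)) ->
  (forall k, 0 <= d k) -> (forall a, 0 <= u a) ->
  (forall a, 0 <= c a) -> (forall a, 0 <= f a) ->
  is_partial_aggregation orig KB agg ->
  (exists x y, mcnd_feasible src dst orig dest d u x y) ->
  pa_value src dst orig dest d u c f KB agg
    <= mcnd_value src dst orig dest d u c f /\
  pai_value src dst orig dest d u c f KB agg
    <= mcnd_value src dst orig dest d u c f /\
  pae_value src dst orig dest d u c f KB agg
    <= mcnd_value src dst orig dest d u c f.
Proof.
move=> _ d0 u0 c0 f0 [_ [_ [Hagg HKB]]] [x0 [y0 F0]].
have ne : exists v, (fun v : R => exists x y, mcnd_feasible src dst orig dest d u x y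
                                   /\ v = mcnd_obj c f x y) v.
  by exists (mcnd_obj c f x0 y0), x0, y0.
split; [|split]; apply: inf_le_gen => //.
- move=> v [x [y [Fx ->]]]; exists (xP x), (yP R y); split.
    exact: (pa_feas Hagg HKB Fx).
  by rewrite (pa_obj_eq c f Hagg HKB).
- by move=> v [x [y [Fx ->]]]; exact: pa_obj_ge0 Fx.
- move=> v [x [y [Fx ->]]]; exists (xP x), (yP R y); split; [|split].
  + exact: (pa_feas Hagg HKB Fx).
  + exact: (pai_ex Hagg Fx).
  + by rewrite (pa_obj_eq c f Hagg HKB).
- by move=> v [x [y [Fx [_ ->]]]]; exact: pa_obj_ge0 Fx.
- move=> v [x [y [Fx ->]]]; exists (xP x), (yP R y).
  exists (zin dst agg x), (zout src agg x); split; [|split].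
  + exact: (pa_feas Hagg HKB Fx).
  + exact: (pae_ex Hagg Fx).
  + by rewrite (pa_obj_eq c f Hagg HKB).
- by move=> v [x [y [zi [zo [Fx [_ ->]]]]]]; exact: pa_obj_ge0 Fx.
Qed.
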